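(* Let $\lambda$ be a regular uncountable cardinal and $\mathcal{C}=\langle\mathcal{C}_\alpha\mid\alpha<\lambda\rangle$ a coherent sequence of length $\lambda$ (of arbitrary width). Suppose $T_0,T_1\subseteq\lambda$ are unbounded and for every $\alpha\in T_1$ there is $C\in\mathcal{C}_\alpha$ with $T_0\cap\alpha\subseteq C$. Then $\mathcal{C}$ has a weak thread.
   Context: For a set of ordinals $A$, $\mathrm{acc}(A)$ is the set of $\beta<\sup\{\alpha+1\mid\alpha\in A\}$ with $\beta=\sup(A\cap\beta)$. A coherent sequence of length $\lambda$ (of arbitrary width) is $\mathcal{C}=\langle\mathcal{C}_\alpha\mid\alpha<\lambda\rangle$ where each $\mathcal{C}_\alpha$ is a nonempty set of closed unbounded subsets of $\alpha$ (for successor $\alpha=\beta+1$, $\mathcal{C}_\alpha=\{\{\beta\}\}$), such that for all $\beta<\lambda$, $C\in\mathcal{C}_\beta$ and $\alpha\in\mathrm{acc}(C)$, $C\cap\alpha\in\mathcal{C}_\alpha$. A weak thread through $\mathcal{C}$ is a club $E\subseteq\lambda$ such that for every $\alpha\in\mathrm{acc}(E)$ there is $C\in\mathcal{C}_\alpha$ with $E\cap\alpha\subseteq C$. *)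

(* Defs.v *)
(* Ordinals below a regular uncountable cardinal lambda are
   modelled by a type T with a strict well-order lt of order type lambda.
   Sets of ordinals are predicates T -> Prop. *)
From Stdlib Require Import Classical FunctionalExtensionality PropExtensionality.

Section Defs.
Variable T : Type.
Variable lt : T -> T -> Prop.

Definition le (a b : T) : Prop := lt a b \/ a = b.

Definition regular_uncountable_cardinal : Prop :=
  (forall a, ~ lt a a) /\
  (forall a b c, lt a b -> lt b c -> lt a c) /\
  (forall a b, lt a b \/ a = b \/ lt b a) /\
  well_founded lt /\
  (* lambda is a cardinal: every alpha < lambda has cardinality < lambda *)
  (forall a : T, ~ exists f : T -> {b : T | lt b a},
        forall x y, f x = f y -> x = y) /\
  (* regular: every unbounded subset of lambda has cardinality lambda *)
  (forall S : T -> Prop, (forall a, exists b, S b /\ le a b) ->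
      exists f : T -> {b : T | S b}, forall x y, f x = f y -> x = y) /\
  (~ exists f : T -> nat, forall x y, f x = f y -> x = y).

Definition unbounded (A : T -> Prop) : Prop :=
  forall a, exists b, A b /\ le a b.

(* acc(A) = { beta < sup{alpha+1 | alpha in A} | beta = sup (A cap beta) } *)
Definition acc (A : T -> Prop) (b : T) : Prop :=
  (exists a, A a /\ le b a) /\
  (forall g, lt g b -> exists a, A a /\ lt g a /\ lt a b).

Definition closed (A : T -> Prop) : Prop :=
  forall b, acc A b -> (exists g, lt g b) -> A b.

Definition club_in (a : T) (C : T -> Prop) : Prop :=
  (forall x, C x -> lt x a) /\
  (forall g, lt g a -> exists c, C c /\ le g c) /\
  closed C.

Definition club (E : T -> Prop) : Prop := unbounded E /\ closed E.

Definition is_succ (a b : T) : Prop :=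
  lt b a /\ forall g, lt g a -> le g b.

(* Cs a C  means  C \in \mathcal{C}_a *)
Definition coherent (Cs : T -> (T -> Prop) -> Prop) : Prop :=
  (forall a, exists C, Cs a C) /\
  (forall a C, Cs a C -> club_in a C) /\
  (forall a b, is_succ a b -> forall C, Cs a C <-> (forall x, C x <-> x = b)) /\
  (forall b C a, Cs b C -> acc C a -> Cs a (fun x => C x /\ lt x a)).

Definition weak_thread (Cs : T -> (T -> Prop) -> Prop) (E : T -> Prop) : Prop :=
  club E /\
  forall a, acc E a -> exists C, Cs a C /\ (forall x, E x -> lt x a -> C x).

End Defs.

(* Main.v *)
Require Import Defs.
From Stdlib Require Import Classical FunctionalExtensionality PropExtensionality.

Theorem lemma2p4 (T : Type) (lt : T -> T -> Prop)
  (Hlam : regular_uncountable_cardinal T lt)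
  (Cs : T -> (T -> Prop) -> Prop) (Hcoh : coherent T lt Cs)
  (T0 T1 : T -> Prop) (H0 : unbounded T lt T0) (H1 : unbounded T lt T1)
  (HT : forall a, T1 a -> exists C, Cs a C /\ (forall x, T0 x -> lt x a -> C x)) :
  exists E, weak_thread T lt Cs E.
Proof.
  destruct Hlam as [_ [Htr _]].
  destruct Hcoh as [_ [Hclub [_ Hcoh]]].
  set (E := fun b => T0 b \/ (acc T lt T0 b /\ exists g, lt g b)).
  assert (key : forall be C, Cs be C -> (forall x, T0 x -> lt x be -> C x) ->
                 forall x, E x -> lt x be -> C x).
  { intros be C HC HT0 x [Hx | [Hacc Hnz]] Hxb; [now apply HT0|].
    destruct (Hclub _ _ HC) as [_ [Hun Hcl]].
    apply Hcl; [|exact Hnz]. split.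
    - exact (Hun x Hxb).
    - intros g Hg. destruct Hacc as [_ Hacc]. destruct (Hacc g Hg) as [a [Ha [Hga Hax]]].
      exists a. repeat split; auto. apply HT0; auto. eapply Htr; eauto. }
  exists E. split; [split|].
  - intros a. destruct (H0 a) as [b [Hb Hab]]. exists b. split; [left; exact Hb|exact Hab].
  - intros b Hacc Hnz. right. split; [|exact Hnz]. split.
    + exact (H0 b).
    + intros g Hg. destruct Hacc as [_ Hacc]. destruct (Hacc g Hg) as [a [[Ha|[Ha _]] [Hga Hab]]].
      * exists a; auto.
      * destruct Ha as [_ Ha]. destruct (Ha g Hga) as [a' [Ha' [Hga' Ha'a]]].
        exists a'. repeat split; auto. eapply Htr; eauto.
  - intros a Hacc. destruct (H1 a) as [be [Hbe Hle]].
    destruct (HT be Hbe) as [C [HC HT0]].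
    pose proof (key be C HC HT0) as K.
    destruct Hle as [Hlt | Heq].
    + exists (fun x => C x /\ lt x a). split.
      * apply (Hcoh be C a HC). split.
        -- destruct (Hclub _ _ HC) as [_ [Hun _]]. exact (Hun a Hlt).
        -- intros g Hg. destruct Hacc as [_ Hacc]. destruct (Hacc g Hg) as [x [Hx [Hgx Hxa]]].
           exists x. repeat split; auto. apply K; auto. eapply Htr; eauto.
      * intros x Hx Hxa. split; auto. apply K; auto. eapply Htr; eauto.
    + subst be. exists C. split; auto.
Qed.
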